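(* Fix $\alpha\in[\tfrac12,1)$. After any sequence of insert, delete and get operations (with counter-based rebuilding), a SAIT storing $n$ keys with total number of accesses $m$ uses $O(m^{\alpha}\cdot n)$ memory.
   Context: A Generic Self-Adjusting Tree (GSAT) with degree function $D$ for a set of integer keys with access counts $ac_i\ge1$ consists of $m=\sum_i ac_i$, an array of $k\le\lceil D(m)\rceil$ representative keys with their access counts, and $k+1$ child subtrees that are GSATs for the keys lying strictly before the first representative, strictly between consecutive representatives, and strictly after the last; every node stores at least one key. A GSAT is ideal if each child $T_j$ of the root satisfies $m(T_j)\le m/(D(m)+1)$, where $m(T_j)$ is the total access count of keys in $T_j$, and each child is ideal. A SAIT is a GSAT with $D(m)=\sqrt m$ in which each node whose subtree has total access count $m'$ at the time of its construction stores an interpolation array $ID$ of size $\lceil m'^{\alpha}\rceil$ and otherwise $O(D(m'))$ data. Dynamic operations: each node $v$ has a counter $C(v)$ and $im(T_v)$, the value of $m(T_v)$ at the last (re)build of $T_v$; an operation on key $x$ walks the search path, increments counters of visited nodes and the access count of $x$ (insert of an absent key adds a new constant-size node holding $x$ with count 1, delete only marks the key); then the shallowest visited $u$ with $C(u)>im(T_u)/4$ (if any) has $T_u$ rebuilt into an ideal SAIT of its unmarked keys, resetting counters to $0$ and $im$ values. *)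

(* Defs.v *)
From Stdlib Require Import Reals ZArith Arith List Sorting.Sorted.
Import ListNotations.
Open Scope R_scope.

(** A stored key with its access count and its deletion mark. *)
Record entry : Type := mkEntry { ekey : Z; ecnt : nat; emark : bool }.

(** A (possibly empty) GSAT.  [Node reps children C im]:
    - [reps]     : the array of representative keys (with counts and marks),
    - [children] : the k+1 child subtrees ([Leaf] = empty subtree),
    - [C]        : the counter C(v),
    - [im]       : im(T_v), the value of m(T_v) at the last (re)build of T_v;
                   it is also the total access count m' of the subtree at the
                   time the node was constructed. *)
Inductive tree : Type :=
| Leaf : tree
| Node : list entry -> list tree -> nat -> nat -> tree.

Fixpoint inorder (t : tree) : list entry :=
  match t with
  | Leaf => []
  | Node reps ch _ _ =>
      (fix go (rs : list entry) (cs : list tree) {struct cs} : list entry :=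
         match cs with
         | [] => []
         | c :: cs' => inorder c ++
             match rs with
             | [] => []
             | r :: rs' => r :: go rs' cs'
             end
         end) reps ch
  end.

Definition mtot (t : tree) : nat := fold_right (fun e s => (ecnt e + s)%nat) 0%nat (inorder t).

(** n: number of keys stored in T (marked keys are still stored). *)
Definition nkeys (t : tree) : nat := length (inorder t).

Definition ceilZ (x : R) : Z := (- Int_part (- x))%Z.

Definition D (m : nat) : R := sqrt (INR m).

(** Memory of one node built when its subtree had total access count m':
    interpolation array of size ceil(m'^alpha) plus O(D(m')) further data,
    taken as ceil(D(m')) + 1 words. *)
Definition node_mem (alpha : R) (m' : nat) : R :=
  IZR (ceilZ (Rpower (INR m') alpha)) + IZR (ceilZ (D m')) + 1.

Fixpoint mem (alpha : R) (t : tree) : R :=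
  match t with
  | Leaf => 0
  | Node _ ch _ im =>
      node_mem alpha im +
      (fix go (cs : list tree) : R :=
         match cs with
         | [] => 0
         | c :: cs' => mem alpha c + go cs'
         end) ch
  end.

Fixpoint ideal (t : tree) : Prop :=
  match t with
  | Leaf => True
  | Node reps ch c im =>
      reps <> [] /\
      length ch = S (length reps) /\
      IZR (Z.of_nat (length reps)) <= IZR (ceilZ (D (mtot t))) /\
      c = 0%nat /\ im = mtot t /\
      (fix go (cs : list tree) : Prop :=
         match cs with
         | [] => True
         | c' :: cs' =>
             (INR (mtot c') <= INR (mtot t) / (D (mtot t) + 1) /\ ideal c') /\ go cs'
         end) ch
  end.

Definition ideal_of (l : list entry) (t : tree) : Prop :=
  ideal t /\ inorder t = l.

Definition unmarked (l : list entry) : list entry :=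
  filter (fun e => negb (emark e)) l.

Inductive op : Type := Ins (x : Z) | Del (x : Z) | Get (x : Z).

Definition op_key (o : op) : Z := match o with Ins x | Del x | Get x => x end.

Definition touch (o : op) (e : entry) : entry :=
  if Z.eqb (ekey e) (op_key o) then
    match o with
    | Ins _ => mkEntry (ekey e) (S (ecnt e)) false
    | Del _ => mkEntry (ekey e) (S (ecnt e)) true
    | Get _ => mkEntry (ekey e) (S (ecnt e)) (emark e)
    end
  else e.

Definition found_in (x : Z) (reps : list entry) : bool :=
  existsb (fun e => Z.eqb (ekey e) x) reps.

Definition child_index (x : Z) (reps : list entry) : nat :=
  length (filter (fun e => Z.ltb (ekey e) x) reps).

Fixpoint replace_nth {A} (j : nat) (a : A) (l : list A) : list A :=
  match l, j with
  | [], _ => []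
  | _ :: l', O => a :: l'
  | b :: l', S j' => b :: replace_nth j' a l'
  end.

Fixpoint acc (o : op) (t : tree) : tree :=
  match t with
  | Leaf =>
      match o with
      | Ins x => Node [mkEntry x 1 false] [Leaf; Leaf] 0 1
      | _ => Leaf
      end
  | Node reps ch c im =>
      if found_in (op_key o) reps then Node (map (touch o) reps) ch (S c) im
      else
        let j := child_index (op_key o) reps in
        Node reps
          ((fix go (i : nat) (cs : list tree) {struct cs} : list tree :=
              match cs with
              | [] => []
              | c0 :: cs' => (if Nat.eqb i j then acc o c0 else c0) :: go (S i) cs'
              end) 0%nat ch)
          (S c) im
  end.

(** One full operation: access phase, then the shallowest visited node u with
    C(u) > im(T_u)/4 (after incrementing) has T_u rebuilt into an (arbitrary)
    ideal SAIT of its unmarked keys. *)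
Inductive step (o : op) : tree -> tree -> Prop :=
| step_leaf : step o Leaf (acc o Leaf)
| step_rebuild : forall reps ch c im t',
    (im < 4 * S c)%nat ->
    ideal_of (unmarked (inorder (acc o (Node reps ch c im)))) t' ->
    step o (Node reps ch c im) t'
| step_found : forall reps ch c im,
    (4 * S c <= im)%nat ->
    found_in (op_key o) reps = true ->
    step o (Node reps ch c im) (acc o (Node reps ch c im))
| step_descend : forall reps ch c im cj',
    (4 * S c <= im)%nat ->
    found_in (op_key o) reps = false ->
    step o (nth (child_index (op_key o) reps) ch Leaf) cj' ->
    step o (Node reps ch c im)
      (Node reps (replace_nth (child_index (op_key o) reps) cj' ch) (S c) im).

Definition valid_keys (l : list entry) : Prop :=
  Sorted (fun a b => (ekey a < ekey b)%Z) l /\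
  Forall (fun e => (1 <= ecnt e)%nat /\ emark e = false) l.

Inductive reachable : tree -> Prop :=
| reach_init : forall l t, valid_keys l -> ideal_of l t -> reachable t
| reach_step : forall o t t', reachable t -> step o t t' -> reachable t'.

(* Main.v *)
Require Import Defs.
From Stdlib Require Import Reals Lra Lia Psatz Arith List.
Import ListNotations.
Open Scope R_scope.
Lemma ceil_le x : IZR (ceilZ x) <= x + 1.
Proof.
  unfold ceilZ. destruct (base_Int_part (- x)) as [H1 H2].
  rewrite opp_IZR. lra.
Qed.

Lemma Rpower_ge1 x a : 1 <= x -> 0 <= a -> 1 <= Rpower x a.
Proof.
  intros Hx Ha. rewrite <- (Rpower_O x) by lra. apply Rle_Rpower; lra.
Qed.

Lemma Rpower_zero a : Rpower 0 a = 1.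
Proof.
  unfold Rpower, ln. destruct (Rlt_dec _ _) as [h|h]; [exfalso; exact (Rlt_irrefl _ h)|]. rewrite Rmult_0_r. apply exp_0.
Qed.

Lemma node_bound alpha im k r M :
  1/2 <= alpha < 1 -> (1 <= k)%nat -> (k <= r)%nat -> (r <= M)%nat ->
  (im <= 2 * r + 9 * k * k)%nat ->
  node_mem alpha im <= 39 * Rpower (INR M) alpha * INR k.
Proof.
  intros Ha Hk Hkr HrM Him.
  assert (HM1 : 1 <= INR M) by (apply (le_INR 1); lia).
  assert (Hk1 : 1 <= INR k) by (apply (le_INR 1); lia).
  assert (HkM : INR k <= INR M) by (apply le_INR; lia).
  assert (HMa : 1 <= Rpower (INR M) alpha) by (apply Rpower_ge1; lra).
  assert (HkMa : 1 <= INR k * Rpower (INR M) alpha) by nra.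
  unfold node_mem, D.
  pose proof (ceil_le (Rpower (INR im) alpha)) as C1.
  pose proof (ceil_le (sqrt (INR im))) as C2.
  destruct im as [|im'].
  - simpl INR in *. rewrite Rpower_zero, sqrt_0 in *. nra.
  - set (im := S im') in *.
    assert (Him1 : 1 <= INR im) by (apply (le_INR 1); lia).
    assert (Hsq : sqrt (INR im) <= Rpower (INR im) alpha).
    { rewrite <- Rpower_sqrt by lra. apply Rle_Rpower; lra. }
    assert (HP : Rpower (INR im) alpha <= 18 * INR k * Rpower (INR M) alpha).
    { destruct (le_lt_dec im (4 * M)) as [H4|H4].
      - assert (INR im <= 4 * INR M).
        { replace 4 with (INR 4) by (simpl; lra). rewrite <- mult_INR. apply le_INR; lia. }
        apply Rle_trans with (Rpower (4 * INR M) alpha).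
        { apply Rle_Rpower_l; lra. }
        rewrite <- Rpower_mult_distr by lra.
        assert (Rpower 4 alpha <= 4).
        { rewrite <- (Rpower_1 4) at 2 by lra. apply Rle_Rpower; lra. }
        nra.
      - assert (H18 : (im <= 18 * (k * k))%nat) by lia.
        assert (INR im <= 18 * (INR k * INR k)).
        { replace 18 with (INR 18) by (simpl; lra). rewrite <- !mult_INR. apply le_INR; lia. }
        apply Rle_trans with (Rpower (18 * (INR k * INR k)) alpha).
        { apply Rle_Rpower_l; lra. }
        rewrite <- Rpower_mult_distr by nra.
        assert (Rpower 18 alpha <= 18).
        { rewrite <- (Rpower_1 18) at 2 by lra. apply Rle_Rpower; lra. }
        assert (Hkk : Rpower (INR k * INR k) alpha <= INR k * Rpower (INR M) alpha).
        { replace (INR k * INR k) with (Rpower (INR k) (INR 2)).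
          2:{ rewrite Rpower_pow by lra. simpl. ring. }
          rewrite Rpower_mult.
          replace (INR 2 * alpha) with (1 + (2 * alpha - 1)) by (simpl; ring).
          rewrite Rpower_plus, Rpower_1 by lra.
          apply Rmult_le_compat_l; [lra|].
          apply Rle_trans with (Rpower (INR M) (2 * alpha - 1)).
          { apply Rle_Rpower_l; lra. }
          apply Rle_Rpower; lra. }
        assert (0 <= Rpower (INR k * INR k) alpha) by (unfold Rpower; left; apply exp_pos).
        assert (0 <= Rpower 18 alpha) by (unfold Rpower; left; apply exp_pos).
        nra. }
    nra.
Qed.

Fixpoint go_in (rs : list entry) (cs : list tree) {struct cs} : list entry :=
  match cs with
  | [] => []
  | c :: cs' => inorder c ++
      match rs with
      | [] => []
      | r :: rs' => r :: go_in rs' cs'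
      end
  end.

Lemma inorder_node reps ch c im : inorder (Node reps ch c im) = go_in reps ch.
Proof. reflexivity. Qed.

Section MG.
Variable alpha : R.
Fixpoint memgo (cs : list tree) : R :=
  match cs with [] => 0 | c :: cs' => mem alpha c + memgo cs' end.
End MG.

Lemma mem_node alpha reps ch c im :
  mem alpha (Node reps ch c im) = node_mem alpha im + memgo alpha ch.
Proof. reflexivity. Qed.

Section AG.
Variables (o : op) (j : nat).
Fixpoint accgo (i : nat) (cs : list tree) : list tree :=
  match cs with
  | [] => []
  | c0 :: cs' => (if Nat.eqb i j then acc o c0 else c0) :: accgo (S i) cs'
  end.
End AG.

Lemma acc_node o reps ch c im : acc o (Node reps ch c im) =
  if found_in (op_key o) reps then Node (map (touch o) reps) ch (S c) im
  else Node reps (accgo o (child_index (op_key o) reps) 0 ch) (S c) im.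
Proof. reflexivity. Qed.

Section AP.
Variable Q : tree -> Prop.
Fixpoint allP (cs : list tree) : Prop :=
  match cs with [] => True | c :: cs' => Q c /\ allP cs' end.
End AP.

Lemma ideal_node reps ch c im : ideal (Node reps ch c im) ->
  reps <> [] /\
  length ch = S (length reps) /\
  IZR (Z.of_nat (length reps)) <= IZR (ceilZ (D (mtot (Node reps ch c im)))) /\
  c = 0%nat /\ im = mtot (Node reps ch c im) /\
  allP (fun c' => INR (mtot c') <= INR (mtot (Node reps ch c im)) / (D (mtot (Node reps ch c im)) + 1) /\ ideal c') ch.
Proof. intro H. exact H. Qed.

Definition sumc (l : list entry) : nat := fold_right (fun e s => (ecnt e + s)%nat) 0%nat l.
Definition sum_mt (cs : list tree) : nat := fold_right (fun c s => (mtot c + s)%nat) 0%nat cs.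
Definition sum_nk (cs : list tree) : nat := fold_right (fun c s => (nkeys c + s)%nat) 0%nat cs.

Lemma mtot_eq t : mtot t = sumc (inorder t).
Proof. reflexivity. Qed.

Lemma sumc_app a b : sumc (a ++ b) = (sumc a + sumc b)%nat.
Proof. induction a; simpl; lia. Qed.

Lemma go_in_sum rs cs : length cs = S (length rs) ->
  sumc (go_in rs cs) = (sumc rs + sum_mt cs)%nat /\
  length (go_in rs cs) = (length rs + sum_nk cs)%nat.
Proof.
  revert cs. induction rs as [|r rs IH]; intros cs Hl; destruct cs as [|c cs]; simpl in Hl; try lia.
  - destruct cs; simpl in Hl; try lia. simpl. rewrite app_nil_r.
    unfold sum_mt, sum_nk; simpl. rewrite <- mtot_eq. unfold nkeys. lia.
  - simpl. rewrite sumc_app, length_app. simpl.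
    destruct (IH cs ltac:(lia)) as [H1 H2]. rewrite H1, H2.
    unfold sum_mt, sum_nk; simpl. fold (sum_mt cs) (sum_nk cs). unfold nkeys. rewrite <- mtot_eq. lia.
Qed.

Lemma go_in_Forall (P : entry -> Prop) rs cs : length cs = S (length rs) ->
  (Forall P (go_in rs cs) <-> Forall P rs /\ Forall (fun c => Forall P (inorder c)) cs).
Proof.
  revert cs. induction rs as [|r rs IH]; intros cs Hl; destruct cs as [|c cs]; simpl in Hl; try lia.
  - destruct cs; simpl in Hl; try lia. simpl. rewrite app_nil_r.
    split; [intros H; repeat constructor; auto | intros [_ H]; inversion H; auto].
  - simpl. rewrite Forall_app. specialize (IH cs ltac:(lia)).
    split.
    + intros [H1 H2]. inversion H2; subst. apply IH in H4. destruct H4.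
      split; constructor; auto.
    + intros [H1 H2]. inversion H1; inversion H2; subst. split; auto.
      constructor; auto. apply IH; auto.
Qed.

Inductive Inv : tree -> Prop :=
| InvL : Inv Leaf
| InvN : forall reps ch c im,
    reps <> [] -> length ch = S (length reps) ->
    Forall (fun e => (1 <= ecnt e)%nat) reps ->
    (im <= 2 * sumc reps + 9 * length reps * length reps)%nat ->
    Forall Inv ch -> Inv (Node reps ch c im).

Fixpoint tree_ind' (P : tree -> Prop) (HL : P Leaf)
  (HN : forall reps ch c im, Forall P ch -> P (Node reps ch c im)) (t : tree) : P t :=
  match t with
  | Leaf => HL
  | Node r ch c im => HN r ch c im
      ((fix F (l : list tree) : Forall P l :=
          match l with
          | [] => Forall_nil _
          | x :: l' => Forall_cons _ (tree_ind' P HL HN x) (F l')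
          end) ch)
  end.

Definition cnt1 (e : entry) : Prop := (1 <= ecnt e)%nat.

Lemma Inv_counts t : Inv t -> Forall cnt1 (inorder t).
Proof.
  induction t using tree_ind'; intros HI.
  - constructor.
  - inversion HI; subst. match goal with h : Forall Inv ch |- _ => rename h into H9 end. rewrite inorder_node. apply go_in_Forall; auto.
    split; auto. clear - H H9. induction ch; constructor; inversion H; inversion H9; subst; auto.
Qed.

Lemma len_le_sumc l : Forall cnt1 l -> (length l <= sumc l)%nat.
Proof. induction 1; simpl; unfold cnt1 in *; lia. Qed.

Lemma touch_cnt o e : (ecnt e <= ecnt (touch o e))%nat.
Proof. unfold touch. destruct (Z.eqb _ _); [destruct o|]; simpl; lia. Qed.

Lemma sumc_map_touch o l : (sumc l <= sumc (map (touch o) l))%nat.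
Proof. induction l; simpl; auto. pose proof (touch_cnt o a). lia. Qed.

Lemma accgo_len o j i cs : length (accgo o j i cs) = length cs.
Proof. revert i; induction cs; intros i; simpl; auto. Qed.

Lemma accgo_Forall o j i cs :
  Forall (fun c => Inv c -> Inv (acc o c)) cs -> Forall Inv cs -> Forall Inv (accgo o j i cs).
Proof.
  revert i; induction cs; intros i H1 H2; simpl; auto.
  inversion H1; inversion H2; subst. constructor; auto.
  destruct (Nat.eqb i j); auto.
Qed.

Lemma Inv_acc o t : Inv t -> Inv (acc o t).
Proof.
  induction t using tree_ind'; intros HI.
  - destruct o; simpl; try constructor.
    + discriminate.
    + reflexivity.
    + repeat constructor.
    + simpl. lia.
    + repeat constructor.
  - inversion HI; subst. rewrite acc_node. destruct (found_in _ _).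
    + constructor; auto.
      * destruct reps; simpl; [congruence| discriminate].
      * rewrite length_map; auto.
      * rewrite Forall_map. eapply Forall_impl; [|eassumption]. intros e He. pose proof (touch_cnt o e). cbv beta in *. lia.
      * rewrite length_map. pose proof (sumc_map_touch o reps). lia.
    + constructor; auto.
      * rewrite accgo_len; auto.
      * apply accgo_Forall; auto.
Qed.

Lemma Forall_nth_Leaf j ch : Forall Inv ch -> Inv (nth j ch Leaf).
Proof.
  revert j; induction ch; intros j H; destruct j; simpl; try constructor; inversion H; subst; auto.
Qed.

Lemma replace_nth_len {A} j (a : A) l : length (replace_nth j a l) = length l.
Proof. revert j; induction l; intros j; destruct j; simpl; auto. Qed.

Lemma replace_nth_Forall j a l : Inv a -> Forall Inv l -> Forall Inv (replace_nth j a l).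
Proof.
  revert j; induction l; intros j Ha H; destruct j; simpl; auto; inversion H; subst; constructor; auto.
Qed.

Lemma allP_Forall (Q : tree -> Prop) cs : allP Q cs -> Forall Q cs.
Proof. induction cs; simpl; intros; [constructor| destruct H; constructor; auto]. Qed.

Lemma sum_mt_bound X cs : Forall (fun c => INR (mtot c) <= X) cs ->
  INR (sum_mt cs) <= INR (length cs) * X.
Proof.
  induction 1. { simpl; lra. }
  change (sum_mt (x :: l)) with (mtot x + sum_mt l)%nat. rewrite plus_INR. replace (INR (length (x :: l))) with (INR (length l) + 1) by (rewrite <- S_INR; reflexivity). lra.
Qed.

Lemma Inv_ideal t : ideal t -> Forall cnt1 (inorder t) -> Inv t.
Proof.
  induction t using tree_ind'; intros HI HC.
  - constructor.
  - apply ideal_node in HI.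
    destruct HI as (Hne & Hlen & _ & _ & Him & Hall).
    apply allP_Forall in Hall.
    rewrite inorder_node in HC. apply go_in_Forall in HC; auto. destruct HC as [HCr HCc].
    assert (Hmt := mtot_eq (Node reps ch c im)). rewrite inorder_node in Hmt.
    destruct (go_in_sum reps ch Hlen) as [Hs _]. rewrite Hs in Hmt.
    set (mt := mtot (Node reps ch c im)) in *.
    constructor; auto.
    + rewrite Him.
      assert (Hb : INR (sum_mt ch) <= INR (length ch) * (INR mt / (D mt + 1))).
      { apply sum_mt_bound. eapply Forall_impl; [|exact Hall]. simpl. tauto. }
      rewrite Hlen, S_INR in Hb.
      assert (Hk : (1 <= length reps)%nat) by (destruct reps; simpl; [congruence|lia]).
      apply INR_le. rewrite Hmt, !plus_INR, !mult_INR. simpl INR.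
      unfold D in Hb. rewrite Hmt, plus_INR in Hb.
      set (r := INR (sumc reps)) in *. set (S := INR (sum_mt ch)) in *.
      set (kk := INR (length reps)) in *.
      assert (Hk1 : 1 <= kk) by (apply (le_INR 1); auto).
      assert (Hr0 : 0 <= r) by apply pos_INR.
      assert (HS0 : 0 <= S) by apply pos_INR.
      set (s := sqrt (r + S)) in *.
      assert (Hs0 : 0 <= s) by apply sqrt_pos.
      assert (Hss : s * s = r + S) by (apply sqrt_sqrt; lra).
      set (q := (r + S) / (s + 1)) in *.
      assert (Hq : q * (s + 1) = r + S) by (unfold q; field; lra).
      assert (Hq0 : 0 <= q) by (unfold q; apply Rmult_le_pos; [lra | left; apply Rinv_0_lt_compat; lra]).
      destruct (Rle_dec (2 * (kk + 1)) (s + 1)).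
      * nra.
      * nra.
    + assert (Hid : Forall ideal ch) by (eapply Forall_impl; [|exact Hall]; simpl; tauto).
      clear - H Hid HCc. induction ch as [|a ch IH]; [constructor|].
      inversion H as [|? ? Ha Hr]; inversion Hid as [|? ? Hb Hr2]; inversion HCc as [|? ? Hc Hr3]; subst.
      constructor; auto.
Qed.

Lemma Forall_unmarked l : Forall cnt1 l -> Forall cnt1 (unmarked l).
Proof.
  intros H. apply Forall_forall. intros x Hx. unfold unmarked in Hx. apply filter_In in Hx.
  rewrite Forall_forall in H. apply H; tauto.
Qed.

Lemma Inv_step o t t' : step o t t' -> Inv t -> Inv t'.
Proof.
  induction 1; intros HI.
  - apply Inv_acc; auto.
  - destruct H0 as [Hid Hin]. apply Inv_ideal; auto. rewrite Hin.
    apply Forall_unmarked, Inv_counts, Inv_acc; auto.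
  - apply Inv_acc; auto.
  - inversion HI; subst. constructor; auto.
    + rewrite replace_nth_len; auto.
    + apply replace_nth_Forall; auto. apply IHstep. apply Forall_nth_Leaf; auto.
Qed.

Lemma reach_Inv t : reachable t -> Inv t.
Proof.
  induction 1.
  - destruct H0 as [Hid Hin]. apply Inv_ideal; auto. rewrite Hin.
    destruct H as [_ H]. eapply Forall_impl; [|exact H]. unfold cnt1. tauto.
  - eapply Inv_step; eauto.
Qed.

Lemma memgo_bound alpha K M cs :
  Forall (fun c => Inv c -> (mtot c <= M)%nat -> mem alpha c <= K * INR (nkeys c)) cs ->
  Forall Inv cs -> (sum_mt cs <= M)%nat -> memgo alpha cs <= K * INR (sum_nk cs).
Proof.
  induction cs; intros H1 H2 H3; simpl. { lra. }
  inversion H1; inversion H2; subst.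
  unfold sum_mt, sum_nk in *; simpl in *. fold (sum_mt cs) (sum_nk cs) in *.
  rewrite plus_INR.
  assert (mem alpha a <= K * INR (nkeys a)) by (apply H4; auto; lia).
  assert (memgo alpha cs <= K * INR (sum_nk cs)) by (apply IHcs; auto; lia).
  lra.
Qed.

Lemma mem_bound alpha M t : 1/2 <= alpha < 1 -> Inv t -> (mtot t <= M)%nat ->
  mem alpha t <= 39 * Rpower (INR M) alpha * INR (nkeys t).
Proof.
  intros Ha. induction t using tree_ind'; intros HI HM.
  - simpl. unfold nkeys; simpl. lra.
  - inversion HI; subst. rewrite mem_node.
    assert (Hmt := mtot_eq (Node reps ch c im)). rewrite inorder_node in Hmt.
    destruct (go_in_sum reps ch H5) as [Hs Hn]. rewrite Hs in Hmt.
    unfold nkeys at 1. rewrite inorder_node, Hn, plus_INR.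
    assert (Hk : (1 <= length reps)%nat) by (destruct reps; simpl; [congruence|lia]).
    assert (Hkr := len_le_sumc reps H6).
    assert (node_mem alpha im <= 39 * Rpower (INR M) alpha * INR (length reps)).
    { apply (node_bound alpha im (length reps) (sumc reps) M); auto; lia. }
    assert (memgo alpha ch <= 39 * Rpower (INR M) alpha * INR (sum_nk ch)).
    { apply (memgo_bound alpha _ M); auto; lia. }
    lra.
Qed.

Theorem theorem6 (alpha : R) (Ha : 1/2 <= alpha < 1) :
  exists C : R, 0 < C /\
    forall t : tree, reachable t ->
      mem alpha t <= C * Rpower (INR (mtot t)) alpha * INR (nkeys t).
Proof.
  exists 39. split; [lra|]. intros t Ht.
  apply mem_bound; auto. apply reach_Inv; auto.
Qed.
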